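(* Let $h>0$ and let $T_h$ be the complete binary tree of height $h$ (with $2^{h+1}-1$ nodes), viewed as a Cartesian tree. Then $|ng(T_h)|=6(2^h-1)-2h$.
   Context: Heights are counted so that a single leaf is the complete binary tree of height $0$. Sequences are finite sequences of pairwise distinct integers indexed from $1$. The Cartesian tree $C(x)$ of a sequence $x$ of length $n$ is empty if $n=0$; otherwise, if $x[i]$ is the minimum of $x$, it is the binary tree with root $i$, left subtree $C(x[1\ldots i-1])$ and right subtree $C(x[i+1\ldots n])$; every binary tree with $n$ nodes is a Cartesian tree. For $1\le i\le n-1$, $\tau(x,i)$ is obtained from $x$ by exchanging $x[i]$ and $x[i+1]$. For a Cartesian tree $T$ with $n$ nodes, $ng(T,i)=\{C(\tau(x,i)) : C(x)=T\}$ for $1\le i\le n-1$ and $ng(T)=\bigcup_{i=1}^{n-1}ng(T,i)$. *)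

(* Defs.v *)
From HB Require Import structures.
From mathcomp Require Import all_boot all_order all_algebra.
Set Implicit Arguments. Unset Strict Implicit. Unset Printing Implicit Defensive.
Import Order.TTheory GRing.Theory Num.Theory.

Inductive tree := E | N of tree & tree.

Fixpoint eqtree (t u : tree) : bool :=
  match t, u with
  | E, E => true
  | N l r, N l' r' => eqtree l l' && eqtree r r'
  | _, _ => false
  end.

Lemma eqtreeP : Equality.axiom eqtree.
Proof.
elim=> [|l IHl r IHr] [|l' r'] /=; try by constructor.
case: (IHl l') => [->|nl]; last by constructor=> -[].
case: (IHr r') => [->|nr]; last by constructor=> -[].
by constructor.
Qed.

HB.instance Definition _ := hasDecEq.Build tree eqtreeP.

Fixpoint tsize (t : tree) : nat :=
  match t with E => 0 | N l r => (tsize l + tsize r).+1 end.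

(* complete binary tree of height h (height 0 = a single node) *)
Fixpoint complete (h : nat) : tree :=
  match h with 0 => N E E | h'.+1 => N (complete h') (complete h') end.

Definition minseq (a : int) (s : seq int) : int :=
  foldr (fun y m => if (y < m)%R then y else m) a s.

(* Cartesian tree, with fuel (fuel = length suffices) *)
Fixpoint ctree_fuel (k : nat) (x : seq int) : tree :=
  match k with
  | 0 => E
  | k'.+1 =>
    match x with
    | [::] => E
    | a :: s =>
      let i := index (minseq a s) x in
      N (ctree_fuel k' (take i x)) (ctree_fuel k' (drop i.+1 x))
    end
  end.

Definition ctree (x : seq int) : tree := ctree_fuel (size x) x.

(* tau x i: exchange x[i] and x[i+1] (1-based positions) *)
Definition tau (x : seq int) (i : nat) : seq int :=
  [seq (if j == i.-1 then nth 0%R x i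
        else if j == i then nth 0%R x i.-1
        else nth 0%R x j) | j <- iota 0 (size x)].

Definition ng_i (T : tree) (i : nat) (t : tree) : Prop :=
  exists x : seq int, uniq x /\ ctree x = T /\ ctree (tau x i) = t.

Definition ng (T : tree) (t : tree) : Prop :=
  exists i : nat, 1 <= i <= (tsize T).-1 /\ ng_i T i t.

(* Main.v *)
Require Import Defs.
From mathcomp Require Import all_boot all_order all_algebra.
From mathcomp Require Import zify.
Import Order.TTheory GRing.Theory Num.Theory.
Notation tsize := Defs.tsize.
Set Implicit Arguments. Unset Strict Implicit. Unset Printing Implicit Defensive.

Lemma minseq_mem a s : minseq a s \in a :: s.
Proof.
elim: s => [|z s IH] /=; first by rewrite inE eqxx.
case: ifP => _; first by rewrite !inE eqxx orbT.
by move: IH; rewrite !inE => /orP[->|->]; rewrite ?orbT.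
Qed.

Lemma minseq_le a s y : y \in a :: s -> (minseq a s <= y)%R.
Proof.
elim: s y => [|z s IH] y /=; first by rewrite inE => /eqP ->.
rewrite !inE => Hy.
case: ifP => Hz.
  case/or3P: Hy => [/eqP->|/eqP->|Hy].
  - by apply: ltW; apply: lt_le_trans Hz (IH _ _); rewrite inE eqxx.
  - by [].
  - by apply: ltW; apply: lt_le_trans Hz (IH _ _); rewrite inE Hy orbT.
case/or3P: Hy => [/eqP->|/eqP->|Hy].
- by apply: IH; rewrite inE eqxx.
- by rewrite leNgt Hz.
- by apply: IH; rewrite inE Hy orbT.
Qed.

Lemma ctree_fuel_S k a s : ctree_fuel k.+1 (a :: s) =
  N (ctree_fuel k (take (index (minseq a s) (a :: s)) (a :: s)))
    (ctree_fuel k (drop (index (minseq a s) (a :: s)).+1 (a :: s))).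
Proof. by []. Qed.

Lemma ctree_fuel_eq k1 k2 x : size x <= k1 -> size x <= k2 ->
  ctree_fuel k1 x = ctree_fuel k2 x.
Proof.
elim: k1 k2 x => [|k1 IH] [|k2] [|a s] //.
move=> H1 H2; rewrite !ctree_fuel_S.
have Hm := minseq_mem a s.
have Hi : index (minseq a s) (a :: s) < size (a :: s) by rewrite index_mem.
move: Hi H1 H2; set i := index _ _; set x := a :: s => Hi H1 H2.
by congr N; apply: IH; rewrite ?size_take_min ?size_drop; lia.
Qed.

Lemma ctree_cons b s : ctree (b :: s) =
  N (ctree (take (index (minseq b s) (b :: s)) (b :: s)))
    (ctree (drop (index (minseq b s) (b :: s)).+1 (b :: s))).
Proof.
rewrite /ctree [size (b :: s)]/= ctree_fuel_S.
have Hm := minseq_mem b s.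
have Hi : index (minseq b s) (b :: s) < size (b :: s) by rewrite index_mem.
move: Hi; set i := index _ _; set x := b :: s => Hi.
have Hx : size x = (size s).+1 by [].
by congr N; apply: ctree_fuel_eq; rewrite ?size_take_min ?size_drop; lia.
Qed.

Lemma ctree_nil : ctree [::] = E. Proof. by []. Qed.

Definition gtall (a : int) (s : seq int) := all (fun y => (a < y)%R) s.

Lemma ctree_cat (l : seq int) (a : int) (r : seq int) : uniq (l ++ a :: r) -> gtall a (l ++ r) ->
  ctree (l ++ a :: r) = N (ctree l) (ctree r).
Proof.
move=> U G.
have [b [s Es]] : exists b s, l ++ a :: r = b :: s by case: l {U G} => [|c l] /=; eauto.
have Hm : minseq b s = a.
  have := minseq_mem b s; rewrite -Es => Hm.
  have Hle : (minseq b s <= a)%R by apply: minseq_le; rewrite -Es mem_cat inE eqxx orbT.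
  apply/eqP; apply/negPn/negP => Hne.
  have : minseq b s \in l ++ r.
    by move: Hm Hne; rewrite !mem_cat inE => /or3P[->|->|->]; rewrite ?orbT.
  move/(allP G) => /=; rewrite ltNge Hle. by [].
have anl : a \notin l.
  apply/negP => al; move: G; rewrite /gtall all_cat => /andP[/allP /(_ a al)].
  by rewrite ltxx.
rewrite Es ctree_cons Hm -Es index_cat (negbTE anl) /= eqxx addn0.
by rewrite take_size_cat // -cat_rcons drop_size_cat // size_rcons.
Qed.

Lemma ctree_dec (x : seq int) : uniq x -> x != [::] ->
  exists l a r, x = l ++ a :: r /\ gtall a (l ++ r).
Proof.
case: x => [|b s] // U _.
set m := minseq b s.
have Hm : m \in b :: s by apply: minseq_mem.
set i := index m (b :: s).
have Hi : i < size (b :: s) by rewrite index_mem.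
have Ex : b :: s = take i (b :: s) ++ m :: drop i.+1 (b :: s).
  by rewrite -{1}(cat_take_drop i (b :: s)) (drop_nth m Hi) nth_index.
exists (take i (b :: s)), m, (drop i.+1 (b :: s)); split => //.
apply/allP => y Hy.
have yx : y \in b :: s by rewrite Ex mem_cat inE; move: Hy; rewrite mem_cat => /orP[->|->]; rewrite ?orbT.
have ym : y != m.
  apply/negP => /eqP ym; move: U; rewrite {1}Ex cat_uniq /= => /and3P[_ H1 /andP[H2 _]].
  move: Hy; rewrite mem_cat ym => /orP[Hl|Hr].
    by move: H1; rewrite Hl.
  by move: Hr => /=; rewrite (negbTE H2).
by rewrite lt_neqAle eq_sym ym /= minseq_le.
Qed.

Lemma gtall_catl a l r : gtall a (l ++ r) -> gtall a l.
Proof. by rewrite /gtall all_cat => /andP[]. Qed.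
Lemma gtall_catr a l r : gtall a (l ++ r) -> gtall a r.
Proof. by rewrite /gtall all_cat => /andP[]. Qed.
Lemma uniq_catl (l r : seq int) : uniq (l ++ r) -> uniq l.
Proof. by rewrite cat_uniq => /and3P[]. Qed.
Lemma uniq_catr (l r : seq int) : uniq (l ++ r) -> uniq r.
Proof. by rewrite cat_uniq => /and3P[]. Qed.

Lemma tsize_ctree (x : seq int) : uniq x -> tsize (ctree x) = size x.
Proof.
have [n] := ubnP (size x); elim: n x => // n IH x Hs U.
case: (x =P [::]) => [->//|/eqP nx].
have [l [a [r [Ex G]]]] := ctree_dec U nx.
move: U; rewrite Ex => U; rewrite ctree_cat //=.
have Ul := uniq_catl U; have Ur : uniq r by move: (uniq_catr U) => /= /andP[].
move: Hs; rewrite Ex size_cat /= => Hs.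
by rewrite !IH //; lia. Qed.

Lemma ctree_E (x : seq int) : uniq x -> ctree x = E -> x = [::].
Proof. by move=> U H; have := tsize_ctree U; rewrite H; case: x {U H}. Qed.

Fixpoint rlen (t : tree) : nat := if t is N _ r then (rlen r).+1 else 0.
Fixpoint llen (t : tree) : nat := if t is N l _ then (llen l).+1 else 0.
Fixpoint ins (t : tree) (k : nat) : tree :=
  match t, k with
  | E, _ => N E E
  | N l r, 0 => N (N l r) E
  | N l r, k'.+1 => N l (ins r k')
  end.
Fixpoint insL (t : tree) (k : nat) : tree :=
  match t, k with
  | E, _ => N E E
  | N l r, 0 => N E (N l r)
  | N l r, k'.+1 => N (insL l k') r
  end.
Fixpoint remR (t : tree) : tree :=
  match t with E => E | N l r => if r is E then l else N l (remR r) end.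
Fixpoint remL (t : tree) : tree :=
  match t with E => E | N l r => if l is E then r else N (remL l) r end.

Lemma remR_NN l t : t != E -> remR (N l t) = N l (remR t).
Proof. by case: t. Qed.
Lemma remL_NN l t : l != E -> remL (N l t) = N (remL l) t.
Proof. by case: l. Qed.

Lemma uniq_mid (l r : seq int) a : uniq (l ++ a :: r) -> uniq l /\ uniq r.
Proof. by move=> U; split; [apply: uniq_catl U| move: (uniq_catr U) => /andP[]]. Qed.

Lemma ctree_single (c : int) : ctree [:: c] = N E E.
Proof. by rewrite (ctree_cat (l:=[::]) (r:=[::])). Qed.

Lemma ctree_rcons_rem (l : seq int) c : uniq (rcons l c) ->
  ctree l = remR (ctree (rcons l c)).
Proof.
have [n] := ubnP (size l); elim: n l => // n IH l Hs U.
have nx : rcons l c != [::] by case: l {Hs U}.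
have [u [a [v [Ex G]]]] := ctree_dec U nx.
rewrite Ex ctree_cat -?Ex //.
case/lastP: v Ex G => [|v' c'] Ex G.
  by move: Ex; rewrite cats1 => /rcons_inj [-> _] /=.
move: Ex; rewrite -rcons_cons -rcons_cat => /rcons_inj [El Ec]; subst l c'.
have U' : uniq (u ++ a :: rcons v' c) by rewrite -rcons_cons -rcons_cat.
have [U1 U2] := uniq_mid U'.
have U0 : uniq (u ++ a :: v') by move: U; rewrite rcons_uniq => /andP[].
rewrite ctree_cat //; last first.
  by move: G; rewrite /gtall !all_cat all_rcons => /andP[-> /andP[_ ->]].
have := tsize_ctree U2; rewrite size_rcons.
case E1 : (ctree (rcons v' c)) => [//|L R] _.
rewrite remR_NN // -E1 -IH //.
move: Hs; rewrite size_cat /=; lia.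
Qed.

Lemma ctree_cons_rem (r : seq int) c : uniq (c :: r) ->
  ctree r = remL (ctree (c :: r)).
Proof.
have [n] := ubnP (size r); elim: n r => // n IH r Hs U.
have nx : c :: r != [::] by [].
have [u [a [v [Ex G]]]] := ctree_dec U nx.
move: (U); rewrite Ex => U'.
rewrite ctree_cat //.
case: u Ex G U' => [|c' u'] Ex G U'.
  by case: Ex => _ ->.
case: Ex => Ec Er; subst c' r.
have [U1 U2] := uniq_mid U'.
have U0 : uniq (u' ++ a :: v) by move: U; rewrite cons_uniq => /andP[].
rewrite ctree_cat //; last first.
  by move: G; rewrite /gtall /= => /andP[_ ->].
have := tsize_ctree U1; rewrite [size _]/=.
case E1 : (ctree (c :: u')) => [//|L R] _.
rewrite remL_NN // -E1 -IH //.
move: Hs; rewrite size_cat /=; lia.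
Qed.

Lemma ctree_rcons_ins (l : seq int) c : uniq (rcons l c) ->
  exists2 k, k <= rlen (ctree l) & ctree (rcons l c) = ins (ctree l) k.
Proof.
have [n] := ubnP (size l); elim: n l => // n IH l Hs U.
case: (l =P [::]) => [->|/eqP nl]; first by exists 0; rewrite //= ctree_single.
have Ul : uniq l by move: U; rewrite rcons_uniq => /andP[].
have [u [a [v [Ex G]]]] := ctree_dec Ul nl.
have cl : c \notin l by move: U; rewrite rcons_uniq => /andP[].
have ca : c != a by apply: contraNneq cl => ->; rewrite Ex mem_cat inE eqxx orbT.
have [U1 U2] : uniq u /\ uniq v by apply: (uniq_mid (a:=a)); rewrite -Ex.
case: (ltgtP c a) => [ca'|ac|/eqP]; last by rewrite (negbTE ca).
- exists 0 => //.
  rewrite -cats1 (ctree_cat (r := [::])) ?cats1 //.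
  have -> : ctree l = N (ctree u) (ctree v) by rewrite Ex ctree_cat // -Ex.
  by [].
  apply/allP => y; rewrite cats0 => yl.
  have : (a <= y)%R.
    case: (y =P a) => [->//|/eqP ya].
    by apply: ltW; apply: (allP G); move: yl; rewrite Ex !mem_cat inE (negbTE ya) /=.
  by apply: lt_le_trans.
- have Uv : uniq (rcons v c).
    by move: U; rewrite Ex rcons_cat rcons_cons => /uniq_mid [].
  have Hv : size v < n by move: Hs; rewrite Ex size_cat /=; lia.
  have [k Hk Ek] := IH v Hv Uv.
  exists k.+1.
    by rewrite Ex ctree_cat -?Ex //=.
  rewrite Ex rcons_cat rcons_cons ctree_cat; last first.
  + by move: G; rewrite /gtall !all_cat all_rcons ac => /andP[-> ->].
  + by rewrite -rcons_cons -rcons_cat -Ex.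
  by rewrite Ek ctree_cat -?Ex.
Qed.

Lemma ctree_cons_ins (r : seq int) c : uniq (c :: r) ->
  exists2 k, k <= llen (ctree r) & ctree (c :: r) = insL (ctree r) k.
Proof.
have [n] := ubnP (size r); elim: n r => // n IH r Hs U.
case: (r =P [::]) => [->|/eqP nr]; first by exists 0; rewrite //= ctree_single.
have Ur : uniq r by move: U; rewrite cons_uniq => /andP[].
have [u [a [v [Ex G]]]] := ctree_dec Ur nr.
have cr : c \notin r by move: U; rewrite cons_uniq => /andP[].
have ca : c != a by apply: contraNneq cr => ->; rewrite Ex mem_cat inE eqxx orbT.
have [U1 U2] : uniq u /\ uniq v by apply: (uniq_mid (a:=a)); rewrite -Ex.
have Er : ctree r = N (ctree u) (ctree v) by rewrite Ex ctree_cat // -Ex.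
case: (ltgtP c a) => [ca'|ac|/eqP]; last by rewrite (negbTE ca).
- exists 0 => //.
  rewrite -[c :: r]cat0s (ctree_cat (l := [::])) //=; first by rewrite Er.
  apply/allP => y yl.
  have : (a <= y)%R.
    case: (y =P a) => [->//|/eqP ya].
    by apply: ltW; apply: (allP G); move: yl; rewrite Ex !mem_cat inE (negbTE ya) /=.
  by apply: lt_le_trans.
- have Uu : uniq (c :: u).
    by move: U; rewrite Ex -cat_cons => /uniq_mid [].
  have Hu : size u < n by move: Hs; rewrite Ex size_cat /=; lia.
  have [k Hk Ek] := IH u Hu Uu.
  exists k.+1; first by rewrite Er /=.
  rewrite Ex -cat_cons ctree_cat; last first.
  + by rewrite /gtall /= ac.
  + by rewrite cat_cons -Ex.
  by rewrite Ek -Ex Er.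
Qed.

Lemma tau_mid (u : seq int) b c w :
  tau (u ++ b :: c :: w) (size u).+1 = u ++ c :: b :: w.
Proof.
apply: (@eq_from_nth _ 0%R); first by rewrite /tau size_map size_iota !size_cat.
move=> j; rewrite /tau size_map size_iota => Hj.
rewrite (nth_map 0%N) ?size_iota // nth_iota // add0n /=.
rewrite !nth_cat.
case: (ltngtP j (size u)) => Hju.
- have -> : (j == (size u).+1) = false by apply/eqP; lia.
  by rewrite ?Hju.
- rewrite ltnn subnn /=.
  case: (j =P (size u).+1) => [->|Hne]; first by rewrite subSn // subnn.
  have [m Hm] : exists m, j - size u = m.+2 by exists (j - size u).-2; lia.
  by rewrite Hm.
- rewrite -Hju subnn ltnNge leqnSn /= subSn // subnn.
  by [].
Qed.

Lemma tau_split (s : seq int) i : 0 < i < size s ->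
  exists u b c w, s = u ++ b :: c :: w /\ size u = i.-1.
Proof.
move=> /andP[Hi1 Hi2].
exists (take i.-1 s), (nth (Posz 0) s i.-1), (nth (Posz 0) s i), (drop i.+1 s); split.
  rewrite -{1}(cat_take_drop i.-1 s); congr cat.
  have H1 : i.-1 < size s by lia.
  rewrite (drop_nth (Posz 0) H1).
  have -> : i.-1.+1 = i by lia.
  by rewrite (drop_nth (Posz 0) Hi2).
by rewrite size_take; case: ifP => //; lia.
Qed.

Lemma tau_catl (l r : seq int) i : 0 < i < size l -> tau (l ++ r) i = tau l i ++ r.
Proof.
move=> Hi; have [u [b [c [w [-> Hu]]]]] := tau_split Hi.
have -> : i = (size u).+1 by lia.
by rewrite -catA /= !tau_mid -catA.
Qed.

Lemma tau_catr (l r : seq int) i : size l < i -> i < size l + size r ->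
  tau (l ++ r) i = l ++ tau r (i - size l).
Proof.
move=> H1 H2.
have Hi : 0 < i - size l < size r by lia.
have [u [b [c [w [Er Hu]]]]] := tau_split Hi.
rewrite Er catA.
have -> : i = (size (l ++ u)).+1 by rewrite size_cat; lia.
have -> : (size (l ++ u)).+1 - size l = (size u).+1 by rewrite size_cat; lia.
by rewrite !tau_mid catA.
Qed.

Lemma tau_perm (s : seq int) i : 0 < i < size s -> perm_eq (tau s i) s.
Proof.
move=> Hi; have [u [b [c [w [-> Hu]]]]] := tau_split Hi.
have -> : i = (size u).+1 by lia.
rewrite tau_mid perm_cat2l.
by rewrite -[c :: b :: w]/([:: c; b] ++ w) -[b :: c :: w]/([:: b; c] ++ w) perm_cat2r
  -[[:: c; b]]/([:: c] ++ [:: b]) perm_catC.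
Qed.

Fixpoint hi (s : seq int) : int :=
  if s is y :: s' then (if (hi s' < y)%R then y else hi s') else 0%R.
Fixpoint lo (s : seq int) : int :=
  if s is y :: s' then (if (y < lo s')%R then y else lo s') else 0%R.

Lemma hi_ge (y : int) s : y \in s -> (y <= hi s)%R.
Proof.
elim: s => [|z s IH] //=; rewrite inE => /orP[/eqP->|ys].
  by case: ifP => // H; lia.
by have := IH ys; case: ifP => // H; lia.
Qed.

Lemma lo_le (y : int) s : y \in s -> (lo s <= y)%R.
Proof.
elim: s => [|z s IH] //=; rewrite inE => /orP[/eqP->|ys].
  by case: ifP => // H; lia.
by have := IH ys; case: ifP => // H; lia.
Qed.

Definition avoid (F x : seq int) := all (fun y => y \notin F) x.

Lemma gtall_cat a (l r : seq int) : gtall a (l ++ r) = gtall a l && gtall a r.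
Proof. exact: all_cat. Qed.
Lemma avoid_cat F (l r : seq int) : avoid F (l ++ r) = avoid F l && avoid F r.
Proof. exact: all_cat. Qed.

Lemma gtall_lo (s : seq int) : gtall (lo s - 1) s.
Proof. by apply/allP => y /lo_le; lia. Qed.

Lemma realize T (m : int) (F : seq int) :
  exists x : seq int, [/\ uniq x, ctree x = T, gtall m x & avoid F x].
Proof.
elim: T m F => [|L IHL R IHR] m F; first by exists [::].
set a : int := (hi (m :: F) + 1)%R.
have am : (m < a)%R by have := @hi_ge m (m :: F) (mem_head m F); rewrite /a; lia.
have aF : a \notin F.
  apply/negP => /(hi_ge) ; rewrite /a /=; case: ifP => H; lia.
have [xl [Ul Cl Gl Al]] := IHL a F.
have [xr [Ur Cr Gr Ar]] := IHR a (xl ++ F).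
exists (xl ++ a :: xr).
have axl : a \notin xl by apply/negP => /(allP Gl); rewrite ltxx.
have axr : a \notin xr by apply/negP => /(allP Gr); rewrite ltxx.
have U : uniq (xl ++ a :: xr).
  rewrite cat_uniq Ul /= axr Ur !andbT; apply/negP => /orP[H|/hasP [y yr yl]]; first by rewrite H in axl.
  by move: (allP Ar y yr); rewrite mem_cat yl.
split => //.
- by rewrite ctree_cat ?Cl ?Cr // gtall_cat Gl Gr.
- rewrite gtall_cat /gtall /= am /=; apply/andP; split.
    by apply/allP => y /(allP Gl); apply: lt_trans.
  by apply/allP => y /(allP Gr); apply: lt_trans.
- rewrite avoid_cat Al /avoid /= aF /=.
  by apply/allP => y /(allP Ar); rewrite mem_cat negb_or => /andP[].
Qed.

Lemma gtall_cons a c (s : seq int) : gtall a (c :: s) = (a < c)%R && gtall a s.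
Proof. by []. Qed.

Lemma gtall_notin a (s : seq int) : gtall a s -> a \notin s.
Proof. by move=> G; apply/negP => /(allP G); rewrite ltxx. Qed.

Lemma gtall_sub a (s t : seq int) : {subset t <= s} -> gtall a s -> gtall a t.
Proof. by move=> sub G; apply/allP => y /sub /(allP G). Qed.

Lemma uniq_join (l r : seq int) a : uniq l -> uniq r -> gtall a (l ++ r) ->
  avoid l r -> uniq (l ++ a :: r).
Proof.
move=> Ul Ur G A.
have al : a \notin l by apply: gtall_notin; move: G; rewrite gtall_cat => /andP[].
have ar : a \notin r by apply: gtall_notin; move: G; rewrite gtall_cat => /andP[].
rewrite cat_uniq Ul /= ar Ur !andbT; apply/negP => /orP[H|/hasP [y yr yl]].
  by rewrite H in al.
by move: (allP A y yr); rewrite yl.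
Qed.

Lemma realize_insL R k (c : int) (F : seq int) : k <= llen R ->
  exists r : seq int, [/\ uniq r, c \notin r, avoid F r, ctree r = R
                        & ctree (c :: r) = insL R k].
Proof.
elim: R k c F => [|L IHL R' IHR] k c F Hk.
  by exists [::]; split => //; rewrite ctree_single; case: k {Hk}.
case: k Hk => [|k] Hk.
  have [r [Ur Cr Gr Ar]] := realize (N L R') c F.
  exists r; split => //; first exact: gtall_notin.
  by rewrite -[c :: r]cat0s ctree_cat //= ?Cr // gtall_notin.
have {}Hk : k <= llen L by [].
have [r1 [U1 c1 A1 C1 I1]] := IHL k c F Hk.
set s := c :: r1 ++ F.
set a : int := (lo s - 1)%R.
have Gs : gtall a s := gtall_lo s.
have ac : (a < c)%R by move: Gs => /andP[].
have G1 : gtall a r1 by apply: gtall_sub Gs => y yr; rewrite /s inE mem_cat yr orbT.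
have aF : a \notin F.
  apply/negP => aF; have := gtall_notin Gs; rewrite /s inE mem_cat aF !orbT.
  by [].
have [r2 [U2 C2 G2 A2]] := realize R' a s.
have A2' : avoid r1 r2.
  by apply/allP => y /(allP A2); rewrite /s inE mem_cat negb_or => /andP[_ /norP[]].
exists (r1 ++ a :: r2); split.
- by apply: uniq_join => //; rewrite gtall_cat G1.
- rewrite mem_cat inE negb_or c1 /= negb_or; apply/andP; split.
    by apply/negP => /eqP ca; move: ac; rewrite ca ltxx.
  by apply/negP => /(allP A2); rewrite /s inE eqxx.
- rewrite avoid_cat A1 /avoid /= aF /=.
  by apply/allP => y /(allP A2); rewrite /s inE mem_cat negb_or => /andP[_ /norP[]].
- by rewrite ctree_cat ?C1 ?C2 // ?uniq_join // gtall_cat G1.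
- have Gc : gtall a ((c :: r1) ++ r2) by rewrite gtall_cat gtall_cons ac G1 G2.
  rewrite -cat_cons ctree_cat ?I1 ?C2 //.
  apply: uniq_join => //; first by rewrite /= c1 U1.
  by apply/allP => y /(allP A2); rewrite /s !inE mem_cat !negb_or => /andP[-> /andP[-> _]].
Qed.

Lemma realize_ins L k (c : int) (F : seq int) : k <= rlen L ->
  exists l : seq int, [/\ uniq l, c \notin l, avoid F l, ctree l = L
                        & ctree (rcons l c) = ins L k].
Proof.
elim: L k c F => [|L' IHL R IHR] k c F Hk.
  by exists [::]; split => //; rewrite /= ctree_single; case: k {Hk}.
case: k Hk => [|k] Hk.
  have [l [Ul Cl Gl Al]] := realize (N L' R) c F.
  exists l; split => //; first exact: gtall_notin.
  rewrite -cats1 ctree_cat //= ?Cl ?cats0 //.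
  by rewrite cats1 rcons_uniq gtall_notin.
have {}Hk : k <= rlen R by [].
have [r1 [U1 c1 A1 C1 I1]] := IHR k c F Hk.
set s := c :: r1 ++ F.
set a : int := (lo s - 1)%R.
have Gs : gtall a s := gtall_lo s.
have ac : (a < c)%R by move: Gs => /andP[].
have G1 : gtall a r1 by apply: gtall_sub Gs => y yr; rewrite /s inE mem_cat yr orbT.
have aF : a \notin F.
  apply/negP => aF; have := gtall_notin Gs; rewrite /s inE mem_cat aF !orbT.
  by [].
have [l2 [U2 C2 G2 A2]] := realize L' a s.
have A2' : avoid l2 r1.
  apply/allP => y yr; apply/negP => yl; move: (allP A2 y yl).
  by rewrite /s inE mem_cat yr orbT.
exists (l2 ++ a :: r1); split.
- by apply: uniq_join => //; rewrite gtall_cat G1 G2.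
- rewrite mem_cat inE !negb_or c1 andbT; apply/andP; split.
    by apply/negP => /(allP A2); rewrite /s inE eqxx.
  by apply/negP => /eqP ca; move: ac; rewrite ca ltxx.
- rewrite avoid_cat /avoid /= aF /=; apply/andP; split => //.
  by apply/allP => y /(allP A2); rewrite /s inE mem_cat negb_or => /andP[_ /norP[]].
- by rewrite ctree_cat ?C2 ?C1 // ?uniq_join // gtall_cat G1 G2.
- rewrite rcons_cat rcons_cons ctree_cat ?I1 ?C2 //.
  + apply: uniq_join => //; first by rewrite rcons_uniq c1.
    * by rewrite gtall_cat G2 /gtall all_rcons ac.
    * by rewrite /avoid all_rcons; apply/andP; split => //;
        apply/negP => /(allP A2); rewrite /s inE eqxx.
  + by rewrite gtall_cat G2 /gtall all_rcons ac.
Qed.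

Fixpoint NGI (T : tree) (i : nat) : seq tree :=
  match T with
  | E => [::]
  | N L R =>
    if i < tsize L then [seq N l R | l <- NGI L i]
    else if i == tsize L then
      (if L is E then [::] else [seq N (remR L) (insL R k) | k <- iota 0 (llen R).+1])
    else if i == (tsize L).+1 then
      (if R is E then [::] else [seq N (ins L k) (remL R) | k <- iota 0 (rlen L).+1])
    else [seq N L r | r <- NGI R (i - (tsize L).+1)]
  end.

Lemma NGI_N L R i : NGI (N L R) i =
    if i < tsize L then [seq N l R | l <- NGI L i]
    else if i == tsize L then
      (if L is E then [::] else [seq N (remR L) (insL R k) | k <- iota 0 (llen R).+1])
    else if i == (tsize L).+1 then
      (if R is E then [::] else [seq N (ins L k) (remL R) | k <- iota 0 (rlen L).+1])
    else [seq N L r | r <- NGI R (i - (tsize L).+1)].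
Proof. by []. Qed.

Lemma ctree_cat_perm (l r l0 r0 : seq int) a :
  perm_eq (l ++ a :: r) (l0 ++ a :: r0) -> uniq (l0 ++ a :: r0) ->
  gtall a (l0 ++ r0) -> ctree (l ++ a :: r) = N (ctree l) (ctree r).
Proof.
move=> P U0 G0.
have U : uniq (l ++ a :: r) by rewrite (perm_uniq P).
apply: ctree_cat => //.
have P2 : perm_eq (a :: l ++ r) (l ++ a :: r) by rewrite -cat1s perm_catCA.
have U' : uniq (a :: l ++ r) by rewrite (perm_uniq P2).
move: U' => /andP[anl _].
apply/allP => y yl.
have ya : y != a by apply: contraNneq anl => <-.
have : y \in l0 ++ a :: r0 by rewrite -(perm_mem P) mem_cat inE; move: yl; rewrite mem_cat => /orP[->|->]; rewrite ?orbT.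
rewrite mem_cat inE (negbTE ya) /= => H.
by apply: (allP G0); rewrite mem_cat.
Qed.

Lemma perm_swap2 (a b : int) s : perm_eq (a :: b :: s) (b :: a :: s).
Proof. by apply/permPl; apply: (perm_catCA [:: a] [:: b] s). Qed.

Lemma ngi_sound T i (x : seq int) : uniq x -> ctree x = T -> 0 < i < tsize T ->
  ctree (tau x i) \in NGI T i.
Proof.
elim: T i x => [|L IHL R IHR] i x U Cx Hi; first by move: Hi; rewrite /=; lia.
have nx : x != [::] by apply/eqP => ex; move: Cx; rewrite ex.
have [l [a [r [Ex G]]]] := ctree_dec U nx.
subst x.
move: Cx; rewrite ctree_cat // => -[Cl Cr].
have [Ul Ur] := uniq_mid U.
have Sl : size l = tsize L by rewrite -Cl tsize_ctree.
have Sr : size r = tsize R by rewrite -Cr tsize_ctree.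
rewrite NGI_N.
case: (ltnP i (tsize L)) => H1.
  have Hi' : 0 < i < size l by lia.
  rewrite tau_catl // (ctree_cat_perm (l0 := l) (r0 := r)) //; last first.
    by rewrite perm_cat2r tau_perm.
  by rewrite Cr; apply: map_f; apply: IHL => //; lia.
case: (i =P tsize L) => [Ei|Ne].
  rewrite ?Ei ?eqxx.
  clear nx; case/lastP: l Cl Sl Ul U G => [|l' c] Cl Sl Ul U G; first by move: Sl Hi Ei => /=; lia.
  have Ei' : i = (size l').+1 by move: Sl; rewrite size_rcons; lia.
  rewrite -Ei Ei' cat_rcons tau_mid.
  rewrite (ctree_cat_perm (l0 := rcons l' c) (r0 := r)) //; last first.
    by rewrite cat_rcons perm_cat2l perm_swap2.
  have Ucr : uniq (c :: r).
    move: U; rewrite cat_rcons => /uniq_catr /andP[]; rewrite inE negb_or => /andP[_ cr] _.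
    by rewrite /= cr Ur.
  have [k Hk Ek] := ctree_cons_ins Ucr.
  rewrite Ek Cr (ctree_rcons_rem Ul) Cl.
  case EL : L => [|L1 L2]; first by move: Cl; rewrite EL => /(ctree_E Ul) /eqP; rewrite -size_eq0 size_rcons.
  rewrite -EL; apply: map_f; rewrite mem_iota; move: Hk; rewrite Cr; lia.
have H2 : tsize L < i by lia.
have H4 : (i == tsize L) = false by apply/eqP.
rewrite ?ltnNge ?(ltnW H2) ?H4.
case: (i =P (tsize L).+1) => [Ei|Ne2].
  clear nx; case: r Cr Sr Ur U G => [|b r'] Cr Sr Ur U G; first by move: Sr Hi Ei => /=; lia.
  rewrite Ei -Sl tau_mid -cat_rcons.
  have P : perm_eq (rcons l b ++ a :: r') (l ++ a :: b :: r').
    by rewrite cat_rcons perm_cat2l perm_swap2.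
  rewrite (ctree_cat_perm (l0 := l) (r0 := b :: r')) //.
  have Ulb : uniq (rcons l b) by move: U; rewrite -(perm_uniq P) => /uniq_catl.
  have [k Hk Ek] := ctree_rcons_ins Ulb.
  rewrite Ek Cl (ctree_cons_rem Ur) Cr.
  case ER : R => [|R1 R2]; first by move: Cr; rewrite ER => /(ctree_E Ur).
  rewrite -ER; apply: map_f; rewrite mem_iota; move: Hk; rewrite Cl; lia.
have H3 : (tsize L).+1 < i by lia.
have Hsz : size (rcons l a) < i by rewrite size_rcons; lia.
have Hsz2 : i < size (rcons l a) + size r by rewrite size_rcons; move: Hi => /=; lia.
rewrite -cat_rcons tau_catr // cat_rcons.
rewrite (ctree_cat_perm (l0 := l) (r0 := r)) //; last first.
  by rewrite perm_cat2l perm_cons tau_perm //; move: Hi => /=; rewrite size_rcons; lia.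
rewrite Cl size_rcons Sl; apply: map_f; apply: IHR => //; move: Hi => /=; lia.
Qed.

Lemma avoid_sym (F x : seq int) : avoid F x = avoid x F.
Proof.
rewrite /avoid; apply/allP/allP => H y yin; apply/negP => yo.
  by move: (H y yo); rewrite yin.
by move: (H y yo); rewrite yin.
Qed.

Lemma ngi_complete T i t : 0 < i < tsize T -> t \in NGI T i ->
  exists x : seq int, [/\ uniq x, ctree x = T & ctree (tau x i) = t].
Proof.
elim: T i t => [|L IHL R IHR] i t Hi; first by [].
rewrite NGI_N.
case: (ltnP i (tsize L)) => H1.
  case/mapP => l0 Hl0 ->.
  have [xl [Ul Cl Tl]] := IHL i l0 (ltac:(lia)) Hl0.
  have [xr [Ur Cr _ Ar]] := realize R 0 xl.
  set a : int := (lo (xl ++ xr) - 1)%R.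
  have Ga : gtall a (xl ++ xr) := gtall_lo (xl ++ xr).
  have U : uniq (xl ++ a :: xr) by apply: uniq_join.
  have Sl : size xl = tsize L by rewrite -Cl tsize_ctree.
  exists (xl ++ a :: xr); split => //; first by rewrite ctree_cat ?Cl ?Cr.
  rewrite tau_catl; last by lia.
  rewrite (ctree_cat_perm (l0 := xl) (r0 := xr)) ?Tl ?Cr //.
  by rewrite perm_cat2r tau_perm //; lia.
case: (i =P tsize L) => [Ei|Ne].
  case EL : L => [|L1 L2] //.
  case/mapP => k; rewrite mem_iota => /andP[_ Hk] ->.
  rewrite -EL.
  have [xl [Ul Cl _ _]] := realize L 0 [::].
  case/lastP: xl Ul Cl => [|l' c] Ul Cl; first by move: Cl; rewrite EL.
  have [r [Ur cr Ar Cr Ir]] := realize_insL c (rcons l' c) (ltac:(lia) : k <= llen R).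
  set a : int := (lo (rcons l' c ++ r) - 1)%R.
  have Ga : gtall a (rcons l' c ++ r) := gtall_lo _.
  have U : uniq (rcons l' c ++ a :: r) by apply: uniq_join => //; rewrite avoid_sym.
  have Sl : size (rcons l' c) = tsize L by rewrite -Cl tsize_ctree.
  exists (rcons l' c ++ a :: r); split => //; first by rewrite ctree_cat ?Cl ?Cr.
  have Ei' : i = (size l').+1 by move: Sl; rewrite size_rcons; lia.
  rewrite Ei' cat_rcons tau_mid.
  rewrite (ctree_cat_perm (l0 := rcons l' c) (r0 := r)) //; last first.
    by rewrite cat_rcons perm_cat2l perm_swap2.
  by rewrite Ir (ctree_rcons_rem Ul) Cl.
case: (i =P (tsize L).+1) => [Ei|Ne2].
  case ER : R => [|R1 R2] //.
  case/mapP => k; rewrite mem_iota => /andP[_ Hk] ->.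
  rewrite -ER.
  have [xr [Ur Cr _ _]] := realize R 0 [::].
  case: xr Ur Cr => [|b r'] Ur Cr; first by move: Cr; rewrite ER.
  have [l [Ul bl Al Cl Il]] := realize_ins b (b :: r') (ltac:(lia) : k <= rlen L).
  set a : int := (lo (l ++ b :: r') - 1)%R.
  have Ga : gtall a (l ++ b :: r') := gtall_lo _.
  have U : uniq (l ++ a :: b :: r') by apply: uniq_join => //; rewrite avoid_sym.
  have Sl : size l = tsize L by rewrite -Cl tsize_ctree.
  exists (l ++ a :: b :: r'); split => //; first by rewrite ctree_cat ?Cl ?Cr.
  rewrite Ei -Sl tau_mid -cat_rcons.
  rewrite (ctree_cat_perm (l0 := l) (r0 := b :: r')) //; last first.
    by rewrite cat_rcons perm_cat2l perm_swap2.
  by rewrite Il (ctree_cons_rem Ur) Cr.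
case/mapP => r0 Hr0 ->.
have Hj : 0 < i - (tsize L).+1 < tsize R by move: Hi => /=; lia.
have [xr [Ur Cr Tr]] := IHR _ r0 Hj Hr0.
have [xl [Ul Cl _ Al]] := realize L 0 xr.
set a : int := (lo (xl ++ xr) - 1)%R.
have Ga : gtall a (xl ++ xr) := gtall_lo (xl ++ xr).
have U : uniq (xl ++ a :: xr) by apply: uniq_join => //; rewrite avoid_sym.
have Sl : size xl = tsize L by rewrite -Cl tsize_ctree.
have Sr : size xr = tsize R by rewrite -Cr tsize_ctree.
exists (xl ++ a :: xr); split => //; first by rewrite ctree_cat ?Cl ?Cr.
rewrite -cat_rcons tau_catr ?size_rcons; try (move: Hi => /=; lia).
rewrite cat_rcons (ctree_cat_perm (l0 := xl) (r0 := xr)) //; last first.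
  by rewrite perm_cat2l perm_cons tau_perm //; lia.
by rewrite Cl Sl Tr.
Qed.

Lemma ng_iff T t : ng T t <-> exists i, 0 < i < tsize T /\ t \in NGI T i.
Proof.
split.
  move=> [i [Hi [x [U [Cx Tx]]]]]; exists i.
  have Hi' : 0 < i < tsize T by move: Hi; lia.
  by split => //; rewrite -Tx; apply: ngi_sound.
move=> [i [Hi Ht]]; exists i; split; first by move: Hi; lia.
by have [x [U Cx Tx]] := ngi_complete Hi Ht; exists x.
Qed.

Fixpoint Sg (h : nat) : seq tree :=
  match h with
  | 0 => [::]
  | h'.+1 =>
    let T := complete h' in
    [seq N l T | l <- Sg h'] ++ [seq N T r | r <- Sg h'] ++
    [seq N (ins T k) (remL T) | k <- iota 0 (rlen T).+1] ++
    [seq N (remR T) (insL T k) | k <- iota 0 (llen T).+1]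
  end.

Lemma Sg_S h : Sg h.+1 =
    [seq N l (complete h) | l <- Sg h] ++ [seq N (complete h) r | r <- Sg h] ++
    [seq N (ins (complete h) k) (remL (complete h)) | k <- iota 0 (rlen (complete h)).+1] ++
    [seq N (remR (complete h)) (insL (complete h) k) | k <- iota 0 (llen (complete h)).+1].
Proof. by []. Qed.

Lemma complete_S h : complete h.+1 = N (complete h) (complete h).
Proof. by []. Qed.

Lemma complete_NE h : complete h != E. Proof. by case: h. Qed.

Lemma rlen_complete h : rlen (complete h) = h.+1.
Proof. by elim: h => //= h ->. Qed.
Lemma llen_complete h : llen (complete h) = h.+1.
Proof. by elim: h => //= h ->. Qed.

Lemma tsize_pos t : t != E -> 0 < tsize t. Proof. by case: t. Qed.

Lemma tsize_ins t k : tsize (ins t k) = (tsize t).+1.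
Proof. by elim: t k => [|l IHl r IHr] [|k] //=; rewrite ?IHr ?addn0 ?addnS. Qed.
Lemma tsize_insL t k : tsize (insL t k) = (tsize t).+1.
Proof. by elim: t k => [|l IHl r IHr] [|k] //=; rewrite ?IHl ?add0n ?addSn. Qed.
Lemma tsize_remR t : tsize (remR t) = (tsize t).-1.
Proof.
elim: t => [|l IHl r IHr] //=; case: r IHr => [|rl rr] IHr /=; first by rewrite addn0.
by rewrite IHr /=; lia.
Qed.
Lemma tsize_remL t : tsize (remL t) = (tsize t).-1.
Proof.
elim: t => [|l IHl r IHr] //=; case: l IHl => [|ll lr] IHl //=.
by rewrite IHl /=; lia.
Qed.

Lemma ins_inj t k1 k2 : k1 <= rlen t -> k2 <= rlen t -> ins t k1 = ins t k2 -> k1 = k2.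
Proof.
elim: t k1 k2 => [|l IHl r IHr] [|k1] [|k2] //=.
- move=> _ _ [El _]; have := f_equal tsize El; rewrite /=; lia.
- move=> _ _ [El _]; have := f_equal tsize El; rewrite /=; lia.
- by move=> H1 H2 [E1]; congr S; apply: IHr.
Qed.
Lemma insL_inj t k1 k2 : k1 <= llen t -> k2 <= llen t -> insL t k1 = insL t k2 -> k1 = k2.
Proof.
elim: t k1 k2 => [|l IHl r IHr] [|k1] [|k2] //=.
- move=> _ _ [_ Er]; have := f_equal tsize Er; rewrite /=; lia.
- move=> _ _ [_ Er]; have := f_equal tsize Er; rewrite /=; lia.
- by move=> H1 H2 [E1]; congr S; apply: IHl.
Qed.

Lemma NGI_NN T i : T != E -> NGI (N T T) i =
  if i < tsize T then [seq N l T | l <- NGI T i]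
  else if i == tsize T then [seq N (remR T) (insL T k) | k <- iota 0 (llen T).+1]
  else if i == (tsize T).+1 then [seq N (ins T k) (remL T) | k <- iota 0 (rlen T).+1]
  else [seq N T r | r <- NGI T (i - (tsize T).+1)].
Proof. by case: T. Qed.

Lemma S_mem h t : t \in Sg h <-> exists i, 0 < i < tsize (complete h) /\ t \in NGI (complete h) i.
Proof.
elim: h t => [|h IH] t.
  by split => // -[i []]; rewrite /=; lia.
have nE := complete_NE h.
have p0 := tsize_pos nE.
rewrite Sg_S complete_S.
set T := complete h in nE p0 IH *.
split.
  rewrite !mem_cat => /or4P [] /mapP [y Hy ->].
  - have [i [Hi Hm]] := (IH y).1 Hy.
    exists i; split; first by rewrite /=; lia.
    rewrite NGI_NN //; have -> : i < tsize T by lia.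
    exact: map_f.
  - have [i [Hi Hm]] := (IH y).1 Hy.
    exists (i + (tsize T).+1); split; first by rewrite /=; lia.
    rewrite NGI_NN //.
    have -> : (i + (tsize T).+1 < tsize T) = false by apply/negbTE; rewrite -leqNgt; lia.
    have -> : (i + (tsize T).+1 == tsize T) = false by apply/negbTE/eqP; lia.
    have -> : (i + (tsize T).+1 == (tsize T).+1) = false by apply/negbTE/eqP; lia.
    by rewrite addnK; apply: map_f.
  - exists (tsize T).+1; split; first by rewrite /=; lia.
    rewrite NGI_NN //.
    have -> : ((tsize T).+1 < tsize T) = false by apply/negbTE; rewrite -leqNgt; lia.
    have -> : ((tsize T).+1 == tsize T) = false by apply/negbTE/eqP; lia.
    by rewrite eqxx; apply: map_f.
  - exists (tsize T); split; first by rewrite /=; lia.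
    by rewrite NGI_NN // ltnn eqxx; apply: map_f.
move=> [i [Hi]]; rewrite NGI_NN //.
case: (ltnP i (tsize T)) => H1.
  case/mapP => y Hy ->; rewrite mem_cat; apply/orP; left; apply: map_f.
  by apply/(IH y); exists i; split => //; lia.
case: (i =P tsize T) => [Ei|Ne].
  by move=> Hm; rewrite !mem_cat Hm !orbT.
case: (i =P (tsize T).+1) => [Ei|Ne2].
  by move=> Hm; rewrite !mem_cat Hm !orbT.
case/mapP => y Hy ->; rewrite !mem_cat; apply/orP; right; apply/orP; left.
apply: map_f; apply/(IH y); exists (i - (tsize T).+1); split => //.
by move: Hi => /=; lia.
Qed.

Lemma S_prop h : uniq (Sg h) /\
  (forall t, t \in Sg h -> tsize t = tsize (complete h) /\ t != complete h).
Proof.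
elim: h => [|h [U IHm]] //.
have nE := complete_NE h.
have p0 := tsize_pos nE.
rewrite Sg_S complete_S.
set T := complete h in nE p0 U IHm *.
have Sins k : tsize (ins T k) = (tsize T).+1 by rewrite tsize_ins.
have SinsL k : tsize (insL T k) = (tsize T).+1 by rewrite tsize_insL.
have SremR : tsize (remR T) = (tsize T).-1 by rewrite tsize_remR.
have SremL : tsize (remL T) = (tsize T).-1 by rewrite tsize_remL.
have Hm : forall t, t \in [seq N l T | l <- Sg h] ++ [seq N T r | r <- Sg h] ++
    [seq N (ins T k) (remL T) | k <- iota 0 (rlen T).+1] ++
    [seq N (remR T) (insL T k) | k <- iota 0 (llen T).+1] ->
    tsize t = tsize (N T T) /\ t != N T T.
  move=> t; rewrite !mem_cat => /or4P [] /mapP [y Hy ->].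
  - have [Sy Ny] := IHm y Hy; split; first by rewrite /= Sy.
    by apply/eqP => -[E1]; move: Ny; rewrite E1 eqxx.
  - have [Sy Ny] := IHm y Hy; split; first by rewrite /= Sy.
    by apply/eqP => -[E1]; move: Ny; rewrite E1 eqxx.
  - split; first by rewrite /= Sins SremL; lia.
    by apply/eqP => -[E1 _]; have := Sins y; rewrite E1; lia.
  - split; first by rewrite /= SinsL SremR; lia.
    by apply/eqP => -[E1 _]; have := SremR; rewrite E1; lia.
refine (conj _ Hm).
have UA : uniq [seq N l T | l <- Sg h] by rewrite map_inj_uniq // => a b [].
have UB : uniq [seq N T r | r <- Sg h] by rewrite map_inj_uniq // => a b [].
have UC : uniq [seq N (ins T k) (remL T) | k <- iota 0 (rlen T).+1].
  rewrite map_inj_in_uniq ?iota_uniq // => a b; rewrite !mem_iota => Ha Hb [E1].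
  by apply: (ins_inj (t := T)) => //; lia.
have UD : uniq [seq N (remR T) (insL T k) | k <- iota 0 (llen T).+1].
  rewrite map_inj_in_uniq ?iota_uniq // => a b; rewrite !mem_iota => Ha Hb [E1].
  by apply: (insL_inj (t := T)) => //; lia.
rewrite !cat_uniq UA UB UC UD !andTb andbT.
apply/and3P; split.
- apply/hasPn => y; rewrite !mem_cat => /or3P [] /mapP [z Hz ->];
    apply/negP => /mapP [w Hw []].
  + move=> E1 _; have [_ Nw] := IHm w Hw; by move: Nw; rewrite -E1 eqxx.
  + move=> E1 _; have [Sw _] := IHm w Hw; have := Sins z; rewrite E1 Sw; lia.
  + move=> E1 _; have [Sw _] := IHm w Hw; move: SremR; rewrite E1 Sw; lia.
- apply/hasPn => y; rewrite !mem_cat => /orP [] /mapP [z Hz ->];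
    apply/negP => /mapP [w Hw []].
  + move=> E1 _; have := Sins z; rewrite E1; lia.
  + move=> E1 _; move: SremR; rewrite E1; lia.
- apply/hasPn => y /mapP [z Hz ->]; apply/negP => /mapP [w Hw []].
  move=> E1 _; move: SremR; rewrite E1 Sins; lia.
Qed.

Lemma S_size h : size (Sg h) = 6 * (2 ^ h - 1) - 2 * h.
Proof.
elim: h => [|h IH] //.
rewrite Sg_S !size_cat !size_map !size_iota rlen_complete llen_complete IH expnS.
have := ltn_expl h (ltnSn 1); lia.
Qed.

Theorem lemma9 (h : nat) : 0 < h ->
  exists s : seq tree,
    uniq s /\ (forall t : tree, t \in s <-> ng (complete h) t) /\
    size s = 6 * (2 ^ h - 1) - 2 * h.
Proof.
move=> _; exists (Sg h); split; first by case: (S_prop h).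
split; last exact: S_size.
by move=> t; rewrite S_mem ng_iff.
Qed.
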